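(* Let $\{z_n\}_{n\ge 0}$ be a sequence of positive real numbers satisfying $$(\alpha_1n+\alpha_0)z_{n+1}=(\beta_1n+\beta_0)z_n-(\gamma_1n+\gamma_0)z_{n-1}\quad (n\ge 1),$$ where $\alpha_1n+\alpha_0$, $\beta_1n+\beta_0$, $\gamma_1n+\gamma_0$ are positive for all $n\ge 1$. Put $A=\beta_0\gamma_1-\beta_1\gamma_0$, $B=\gamma_0\alpha_1-\gamma_1\alpha_0$, $C=\alpha_0\beta_1-\alpha_1\beta_0$. Suppose $z_0z_2\le z_1^2$. Then $\{z_n\}_{n\ge 0}$ is log-concave if one of the following holds: (i) $B\le 0$ and $C\le 0$; (ii) $B<0$, $C>0$, $AC\le B^2$ and $z_0B+z_1C\le 0$; (iii) $B>0$, $C<0$, $AC\ge B^2$ and $z_0B+z_1C\le 0$.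
   Context: A sequence $a_0,a_1,\ldots$ of nonnegative real numbers is log-concave if $a_{k-1}a_{k+1}\le a_k^2$ for all $k\ge 1$. *)

(* Defs.v *)
From Stdlib Require Import Reals.
Open Scope R_scope.

Definition log_concave (a : nat -> R) : Prop :=
  (forall n, 0 <= a n) /\ (forall k, (1 <= k)%nat -> a (k - 1)%nat * a (k + 1)%nat <= a k ^ 2).

(* Main.v *)
Require Import Defs.
From Stdlib Require Import Reals Lra Lia Psatz.
Open Scope R_scope.

Theorem theorem3p11 (z : nat -> R) (a1 a0 b1 b0 c1 c0 : R) :
  (forall n, 0 < z n) ->
  (forall n, (1 <= n)%nat ->
     (a1 * INR n + a0) * z (n + 1)%nat
     = (b1 * INR n + b0) * z n - (c1 * INR n + c0) * z (n - 1)%nat) ->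
  (forall n, (1 <= n)%nat ->
     0 < a1 * INR n + a0 /\ 0 < b1 * INR n + b0 /\ 0 < c1 * INR n + c0) ->
  z 0%nat * z 2%nat <= z 1%nat ^ 2 ->
  let A := b0 * c1 - b1 * c0 in
  let B := c0 * a1 - c1 * a0 in
  let C := a0 * b1 - a1 * b0 in
  (B <= 0 /\ C <= 0)
  \/ (B < 0 /\ 0 < C /\ A * C <= B ^ 2 /\ z 0%nat * B + z 1%nat * C <= 0)
  \/ (0 < B /\ C < 0 /\ A * C >= B ^ 2 /\ z 0%nat * B + z 1%nat * C <= 0) ->
  log_concave z.
Proof.
  intros Hpos Hrec Hcoef H02 A B C Hcase.
  assert (Hstep : forall m,
    z m * z (m+2)%nat <= z (m+1)%nat ^ 2 /\ z (m+1)%nat * C + z m * B <= 0).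
  { induction m as [|m [IH1 IH2]].
    - split; [exact H02|].
      destruct Hcase as [[HB HC]|[[HB [HC [_ H]]]|[HB [HC [_ H]]]]].
      + pose proof (Hpos 0%nat); pose proof (Hpos 1%nat). simpl. nra.
      + simpl. lra.
      + simpl. lra.
    - replace (S m + 1)%nat with (m+2)%nat by lia.
      replace (S m + 2)%nat with (m+3)%nat by lia.
      replace (S m) with (m+1)%nat by lia.
      pose proof (Hpos m) as Py. pose proof (Hpos (m+1)%nat) as Px.
      pose proof (Hpos (m+2)%nat) as Pw.
      destruct (Hcoef (m+1)%nat ltac:(lia)) as [Pa [Pb Pc]].
      destruct (Hcoef (m+2)%nat ltac:(lia)) as [Pa' [Pb' Pc']].
      pose proof (Hrec (m+1)%nat ltac:(lia)) as R1.
      pose proof (Hrec (m+2)%nat ltac:(lia)) as R2.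
      replace (m+1+1)%nat with (m+2)%nat in R1 by lia.
      replace (m+1-1)%nat with m in R1 by lia.
      replace (m+2+1)%nat with (m+3)%nat in R2 by lia.
      replace (m+2-1)%nat with (m+1)%nat in R2 by lia.
      replace (INR (m+2)) with (INR (m+1)+1) in R2, Pa', Pb', Pc'
        by (rewrite !plus_INR; simpl; ring).
      set (x := z (m+1)%nat) in *. set (y := z m) in *. set (w := z (m+2)%nat) in *.
      set (v := z (m+3)%nat) in *.
      set (t := INR (m+1)) in *.
      set (a := a1*t+a0) in *. set (b := b1*t+b0) in *. set (c := c1*t+c0) in *.
      assert (Hid : a * A + b * B + c * C = 0)
        by (unfold a, b, c, A, B, C; ring).
      assert (E2 : w * C + x * B <= 0).
      { destruct Hcase as [[HB HC]|[[HB [HC [_ H]]]|[HB [HC [HAC H]]]]].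
        + nra.
        + assert (y * (w*C + x*B) <= x * (x*C + y*B)) by nra.
          assert (y * (w*C + x*B) <= 0) by nra. nra.
        + assert (HaE : a * (w*C + x*B) = (b*x - c*y)*C + a*x*B) by
            (rewrite Rmult_plus_distr_l, <- Rmult_assoc, R1; ring).
          assert (K1 : - c * C * (y * B) <= - c * C * (- x * C)).
          { apply Rmult_le_compat_l; nra. }
          assert (K2 : B * (a * (w*C + x*B)) <= x * a * (B^2 - A*C)).
          { rewrite HaE.
            assert (x * a * (B^2 - A*C) = x*(b*B*C + a*B^2 + c*C^2)).
            { assert (a*A = - b*B - c*C) by lra.
              replace (x * a * (B^2 - A*C)) with (x*(a*B^2) - x*C*(a*A)) by ring.
              rewrite H0. ring. }
            rewrite H0. nra. }
          assert (x * a * (B^2 - A*C) <= 0).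
          { assert (0 < x * a) by nra. nra. }
          assert (0 < B * a) by nra.
          nra. }
      split; [|exact E2].
      assert (Hab : a * (b1*(t+1)+b0) - (a1*(t+1)+a0) * b = C)
        by (unfold a, b, C; ring).
      assert (Hac : a * (c1*(t+1)+c0) - (a1*(t+1)+a0) * c = - B)
        by (unfold a, c, B; ring).
      set (a' := a1*(t+1)+a0) in *. set (b' := b1*(t+1)+b0) in *.
      set (c' := c1*(t+1)+c0) in *.
      assert (G : a * (a' * (x * v)) <= a * (a' * w^2)).
      { replace (a * (a' * (x * v))) with (a * x * (a' * v)) by ring.
        rewrite R2.
        replace (a * x * (b' * w - c' * x))
          with (x * w * (a*b') - x*x*(a*c')) by ring.
        replace (a*b') with (C + a'*b) by lra.
        replace (a*c') with (a'*c - B) by lra.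
        assert (y * w <= x^2) by lra.
        assert (b*x*w - c*x*x <= a*w^2).
        { replace (a*w^2) with (w*(a*w)) by ring. rewrite R1. nra. }
        assert (x*(w*C + x*B) <= 0) by nra.
        nra. }
      assert (0 < a * a') by nra.
      nra. }
  split.
  - intro n; left; apply Hpos.
  - intros k Hk. destruct k as [|m]; [lia|].
    destruct (Hstep m) as [H _].
    replace (S m - 1)%nat with m by lia.
    replace (S m + 1)%nat with (m+2)%nat by lia.
    replace (S m) with (m+1)%nat by lia. exact H.
Qed.
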